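(* Consider the following conjunctive hierarchical secret sharing scheme. Setting. Let $\mathcal{P}=\{1,\dots,n\}$ be partitioned into consecutive blocks $\mathcal{P}_\ell=\{N_{\ell-1}+1,\dots,N_\ell\}$, $\ell\in[m]$, where $N_0=0$ and $N_\ell=\sum_{w=1}^{\ell}|\mathcal{P}_w|$, so $\bigcup_{w=1}^{\ell}\mathcal{P}_w=[N_\ell]$. Let $1\le t_1<\dots<t_m$ with $t_\ell\le N_\ell$. The access structure is $\Gamma=\{\mathcal{A}\subseteq\mathcal{P}: |\mathcal{A}\cap(\bigcup_{w=1}^{\ell}\mathcal{P}_w)|\ge t_\ell\text{ for all }\ell\in[m]\}$. Public parameters. A prime $m_0$ and integers $m_1,\dots,m_n$ with $\gcd(m_i,m_j)=1$ for $0\le i<j\le n$, $m_0<m_1<\dots<m_n$, and $km_0<m_i<km_0+m_0^{\theta}$ for all $i\in[n]$, for some reals $k\ge1$, $\theta\in(0,1)$; distinct public functions $h_1,\dots,h_m$ with $h_\ell(x,\ell)\in\mathbb{Z}_{m_i}$ for $x\in\mathbb{Z}_{m_i}$. Share generation. For a secret $s\in\mathbb{Z}_{m_0}$ the dealer chooses $\delta_1,\dots,\delta_{m-1}\in\mathbb{Z}_{m_0}$, sets $\delta_m=(s-\delta_1-\dots-\delta_{m-1})\bmod m_0$, and chooses integers $\alpha_\ell$ with $0\le y_\ell:=\delta_\ell+\alpha_\ell m_0<\prod_{i=1}^{t_\ell}m_i$ for $\ell\in[m]$. It chooses $c_i\in\mathbb{Z}_{m_i}$ for $i\in[N_{m-1}]$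 and gives participant $i$ the share $s_i=c_i$ if $i\in[N_{m-1}]$ and $s_i=y_m\bmod m_i$ if $i\in\{N_{m-1}+1,\dots,N_m\}$. For every $i\in[N_{m-1}]$, with $\ell_1\in[m-1]$ such that $i\in\mathcal{P}_{\ell_1}$, it publishes $w_i^{(\ell)}=(y_\ell-h_\ell(s_i,\ell))\bmod m_i$ for all $\ell\in\{\ell_1,\dots,m\}$. Reconstruction. For $\mathcal{A}\in\Gamma$ and each $\ell\in[m]$, with $\mathcal{A}^{(\ell)}=\mathcal{A}\cap[N_\ell]$, compute for $i\in\mathcal{A}^{(\ell)}$: $s_i^{(\ell)}=h_\ell(s_i,\ell)+w_i^{(\ell)}$ if $\ell\le m-1$, or if $\ell=m$ and $i\le N_{m-1}$; $s_i^{(m)}=s_i$ if $i>N_{m-1}$. Compute $Y_\ell=\left(\sum_{i\in\mathcal{A}^{(\ell)}}\lambda_iM_is_i^{(\ell)}\right)\bmod M$ where $M=\prod_{i\in\mathcal{A}^{(\ell)}}m_i$, $M_i=M/m_i$, $\lambda_i\equiv M_i^{-1}\pmod{m_i}$, and output $(\sum_{\ell=1}^{m}(Y_\ell\bmod m_0))\bmod m_0$. Claim. For every secret $s\in\mathbb{Z}_{m_0}$, every admissible choice of the $\delta_\ell,\alpha_\ell,c_i$, and every $\mathcal{A}\in\Gamma$, one has $Y_\ell=y_\ell$ and $Y_\ell\bmod m_0=\delta_\ell$ for every $\ell\in[m]$, and the reconstruction outputs $s$.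
   Context: $\mathbb{Z}_q=\{0,\dots,q-1\}$, $x\bmod q$ is the least nonnegative residue, $[n]=\{1,\dots,n\}$. The functions $h_\ell$ are intended to be one-way functions; no property beyond being fixed public maps is used. *)

(* Defs.v *)
From Stdlib Require Reals.
From mathcomp Require Import all_boot all_order all_algebra.
Set Implicit Arguments. Unset Strict Implicit. Unset Printing Implicit Defensive.
Import Order.TTheory GRing.Theory Num.Theory.

Definition crt_size_bound (m0 mi : nat) (k theta : Rdefinitions.R) : Prop :=
  Rdefinitions.Rlt (Rdefinitions.Rmult k (Raxioms.INR m0)) (Raxioms.INR mi) /\
  Rdefinitions.Rlt (Raxioms.INR mi)
    (Rdefinitions.Rplus (Rdefinitions.Rmult k (Raxioms.INR m0))
                        (Rpower.Rpower (Raxioms.INR m0) theta)).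

Local Open Scope ring_scope.

Definition yval (m0 : nat) (delta alpha : nat -> int) (l : nat) : int :=
  delta l + alpha l * m0%:Z.

Definition share (md N : nat -> nat) (m : nat) (delta alpha : nat -> int)
    (c : nat -> nat) (i : nat) : int :=
  if (i <= N m.-1)%N then (c i)%:Z
  else (yval (md 0%N) delta alpha m %% (md i)%:Z)%Z.

Definition pubw (md N : nat -> nat) (m : nat) (delta alpha : nat -> int)
    (c : nat -> nat) (h : nat -> int -> nat -> int) (i l : nat) : int :=
  ((yval (md 0%N) delta alpha l - h l (share md N m delta alpha c i) l)
     %% (md i)%:Z)%Z.

Definition sl (md N : nat -> nat) (m : nat) (delta alpha : nat -> int)
    (c : nat -> nat) (h : nat -> int -> nat -> int) (i l : nat) : int :=
  if (l <= m.-1)%N || (i <= N m.-1)%N then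
    h l (share md N m delta alpha c i) l + pubw md N m delta alpha c h i l
  else share md N m delta alpha c i.

Definition bigM (md N : nat -> nat) (A : pred nat) (l : nat) : nat :=
  (\prod_(1 <= i < (N l).+1 | A i) md i)%N.

Definition Yval (md N : nat -> nat) (m : nat) (delta alpha : nat -> int)
    (c : nat -> nat) (h : nat -> int -> nat -> int) (A : pred nat)
    (lam : nat -> nat -> int) (l : nat) : int :=
  ((\sum_(1 <= i < (N l).+1 | A i)
      lam l i * ((bigM md N A l %/ md i)%N)%:Z * sl md N m delta alpha c h i l)
    %% (bigM md N A l)%:Z)%Z.

Definition output (md N : nat -> nat) (m : nat) (delta alpha : nat -> int)
    (c : nat -> nat) (h : nat -> int -> nat -> int) (A : pred nat)
    (lam : nat -> nat -> int) : int :=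
  ((\sum_(1 <= l < m.+1)
      (Yval md N m delta alpha c h A lam l %% (md 0%N)%:Z)%Z)
    %% (md 0%N)%:Z)%Z.

(* Main.v *)
Require Import Defs.
From Stdlib Require Reals.
From mathcomp Require Import all_boot all_order all_algebra.
Import Order.TTheory GRing.Theory Num.Theory.
From mathcomp Require Import zify ring.
Local Open Scope ring_scope.


Lemma coprime_prod_seq (md : nat -> nat) (a : nat) (r : seq nat) :
  (forall j, j \in r -> coprime a (md j)) -> coprime a (\prod_(j <- r) md j).
Proof.
elim: r => [|x r IH] H; first by rewrite big_nil coprimen1.
rewrite big_cons coprimeMr H ?mem_head //= IH // => j Hj.
by apply: H; rewrite in_cons Hj orbT.
Qed.

Lemma crt_dvd (md : nat -> nat) (r : seq nat) (x : int) :
  uniq r -> (forall i j, i \in r -> j \in r -> i != j -> coprime (md i) (md j)) ->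
  (forall i, i \in r -> ((md i)%:Z %| x)%Z) ->
  (((\prod_(i <- r) md i)%N)%:Z %| x)%Z.
Proof.
elim: r => [|a r IH] /= Hu Hc Hd; first by rewrite big_nil dvd1z.
case/andP: Hu => Har Hu.
rewrite big_cons PoszM Gauss_dvdz.
  rewrite Hd ?mem_head //= IH // => [i j Hi Hj|i Hi].
    by apply: Hc; rewrite in_cons ?Hi ?Hj orbT.
  by apply: Hd; rewrite in_cons Hi orbT.
rewrite coprimezE /=; apply: coprime_prod_seq => j Hj.
apply: Hc; rewrite ?mem_head ?in_cons ?Hj ?orbT //.
by apply/eqP => E; move: Har; rewrite E Hj.
Qed.

Lemma prod_pos (md : nat -> nat) (n : nat) (r : seq nat) :
  (forall i, (i <= n)%N -> (0 < md i)%N) -> all (fun i => i <= n)%N r ->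
  (0 < \prod_(i <- r) md i)%N.
Proof.
move=> Hp; elim: r => [|x r IH] /=; first by rewrite big_nil.
case/andP=> Hx Hr; rewrite big_cons muln_gt0 Hp //= IH //.
Qed.

Lemma prod_ge (md : nat -> nat) (n : nat)
  (Hmono : forall i j, (i <= j <= n)%N -> (md i <= md j)%N)
  (Hp : forall i, (i <= n)%N -> (0 < md i)%N) :
  forall r a k, sorted ltn r -> all (fun i => a <= i <= n)%N r -> (k <= size r)%N ->
  (\prod_(a <= i < a + k) md i <= \prod_(i <- r) md i)%N.
Proof.
elim=> [|x r IH] a [|k] Hs Hall Hk /=.
- by rewrite addn0 big_geq // big_nil.
- by [].
- rewrite addn0 big_geq // ; have := @prod_pos md n (x :: r) Hp.
apply; apply/allP => i Hi /=.
  by case/andP: (allP Hall i Hi).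
- rewrite big_ltn; last by lia.
  rewrite big_cons addnS -addSn; case/andP: Hall => /andP[Hax Hxn] Hr.
  apply: leq_mul; first by apply: Hmono; rewrite Hax Hxn.
  have Hs' : path ltn x r := Hs; rewrite (path_sortedE ltn_trans) in Hs'.
  case/andP: Hs' => Hxr Hsr.
  apply: IH => //.
  apply/allP => i Hi; case/andP: (allP Hr i Hi) => _ ->.
  by rewrite andbT; apply: leq_ltn_trans Hax _; apply: (allP Hxr).
Qed.

Theorem mainTheorem4
  (n m : nat) (N t md : nat -> nat) (h : nat -> int -> nat -> int)
  (s : nat) (delta alpha : nat -> int) (c : nat -> nat)
  (A : pred nat) (lam : nat -> nat -> int)
  (* partition of [n] into nonempty consecutive blocks P_l = {N_{l-1}+1..N_l} *)
  (Hm : (1 <= m)%N)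
  (HN0 : N 0%N = 0%N)
  (HNinc : forall l, (1 <= l <= m)%N -> (N l.-1 < N l)%N)
  (HNm : N m = n)
  (* thresholds *)
  (Ht1 : (1 <= t 1%N)%N)
  (Htinc : forall l, (1 <= l < m)%N -> (t l < t l.+1)%N)
  (HtN : forall l, (1 <= l <= m)%N -> (t l <= N l)%N)
  (* moduli *)
  (Hprime : prime (md 0%N))
  (Hcop : forall i j, (i < j <= n)%N -> coprime (md i) (md j))
  (Hinc : forall i, (i < n)%N -> (md i < md i.+1)%N)
  (Hsize : exists k theta : Rdefinitions.R,
      Rdefinitions.Rle (Raxioms.INR 1) k /\
      Rdefinitions.Rlt (Raxioms.INR 0) theta /\
      Rdefinitions.Rlt theta (Raxioms.INR 1) /\
      forall i, (1 <= i <= n)%N -> crt_size_bound (md 0%N) (md i) k theta)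
  (* public functions h_l(x, l) *)
  (Hh : forall l i (x : int), (1 <= l <= m)%N -> (1 <= i <= n)%N ->
      0 <= x < (md i)%:Z -> 0 <= h l x l < (md i)%:Z)
  (Hhdist : forall l1 l2, (1 <= l1 <= m)%N -> (1 <= l2 <= m)%N ->
      l1 <> l2 -> h l1 <> h l2)
  (* secret and dealer choices *)
  (Hs : (s < md 0%N)%N)
  (Hdelta : forall l, (1 <= l < m)%N -> 0 <= delta l < (md 0%N)%:Z)
  (Hdeltam : delta m =
      ((s%:Z - \sum_(1 <= l < m) delta l) %% (md 0%N)%:Z)%Z)
  (Hy : forall l, (1 <= l <= m)%N ->
      0 <= yval (md 0%N) delta alpha l < (\prod_(1 <= i < (t l).+1) md i)%N%:Z)
  (Hc : forall i, (1 <= i <= N m.-1)%N -> (c i < md i)%N)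
  (* authorized set A in Gamma *)
  (HA : forall i, A i -> (1 <= i <= n)%N)
  (HAgam : forall l, (1 <= l <= m)%N -> (t l <= count A (iota 1 (N l)))%N)
  (* lambda_i = M_i^{-1} mod m_i *)
  (Hlam : forall l i, (1 <= l <= m)%N -> (1 <= i <= N l)%N -> A i ->
      (lam l i * ((bigM md N A l %/ md i)%N)%:Z == 1 %[mod (md i)%:Z])%Z) :
  (forall l, (1 <= l <= m)%N ->
     Yval md N m delta alpha c h A lam l = yval (md 0%N) delta alpha l /\
     (Yval md N m delta alpha c h A lam l %% (md 0%N)%:Z)%Z = delta l) /\
  output md N m delta alpha c h A lam = s%:Z.
Proof.
have md0gt1 : (1 < md 0)%N := prime_gt1 Hprime.
have Hmono : forall i j, (i <= j <= n)%N -> (md i <= md j)%N.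
  move=> i j; elim: j => [|j IH]; first by rewrite leqn0 => /andP[/eqP-> _].
  move=> /andP[Hij Hjn]; rewrite leq_eqVlt in Hij; case/orP: Hij => [/eqP->//|Hij].
  apply: leq_trans (IH _) (ltnW (Hinc j _)); lia.
have Hpos : forall i, (i <= n)%N -> (0 < md i)%N.
  move=> i Hi; apply: leq_trans (ltnW md0gt1) (Hmono 0%N i _); lia.
have HNmono : forall l, (l <= m)%N -> (N l <= n)%N.
  suff H : forall k l, (l + k = m)%N -> (N l <= n)%N.
    by move=> l Hl; apply: (H (m - l)%N); lia.
  elim=> [|k IH] l Hlk; first by rewrite -HNm -Hlk addn0.
  apply: leq_trans (IH l.+1 _); last by lia.
  have := HNinc l.+1; rewrite /=; move=> H; apply: ltnW; apply: H; lia.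
have Hmd0 : (0 < (md 0%N)%:Z) by rewrite ltz_nat; lia.
have part1 : forall l, (1 <= l <= m)%N ->
    Yval md N m delta alpha c h A lam l = yval (md 0%N) delta alpha l.
  move=> l Hl.
  have HNl : (N l <= n)%N by apply: HNmono; lia.
  pose r := [seq i <- iota 1 (N l) | A i].
  have Er : [seq x <- index_iota 1 (N l).+1 | A x] = r by rewrite /index_iota subn1.
  have Hr_in : forall i, i \in r -> (1 <= i <= N l)%N && A i.
    move=> i; rewrite mem_filter mem_iota => /andP[-> H]; rewrite andbT; lia.
  have Hur : uniq r := filter_uniq _ (iota_uniq _ _).
  have HM : bigM md N A l = (\prod_(i <- r) md i)%N by rewrite /bigM -big_filter Er.
  have Hcong : forall i, i \in r ->
      ((md i)%:Z %| sl md N m delta alpha c h i l - yval (md 0%N) delta alpha l)%Z.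
    move=> i Hi; rewrite -eqz_mod_dvd; apply/eqP; rewrite /sl.
    case: ifP => Hc0.
      by rewrite /pubw modzDmr addrC subrK.
    case/norP: (negbT Hc0) => H1 H2.
    have El : l = m by lia.
    subst l; by rewrite /share (negbTE H2) modz_mod.
  have HMi : forall i, i \in r ->
      (bigM md N A l %/ md i = \prod_(k <- r | k != i) md k)%N.
    move=> i Hi; rewrite HM (bigD1_seq i) //= mulKn // Hpos //.
    case/andP: (Hr_in i Hi) => /andP[_ H] _; lia.
  pose S := \sum_(i <- r) lam l i * ((bigM md N A l %/ md i)%N)%:Z
                          * sl md N m delta alpha c h i l.
  have HY : Yval md N m delta alpha c h A lam l = (S %% (bigM md N A l)%:Z)%Z.
    by rewrite /Yval -big_filter Er.
  have Hdvd : forall j, j \in r -> ((md j)%:Z %| S - yval (md 0%N) delta alpha l)%Z.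
    move=> j Hj; rewrite /S (bigD1_seq j) //= addrAC.
    apply: rpredD.
      have -> : forall (L Mj s0 y0 : int), L * Mj * s0 - y0 = (L * Mj - 1) * s0 + (s0 - y0).
        by move=> *; ring.
      apply: rpredD; last by apply: Hcong.
      apply: dvdz_mulr; rewrite -eqz_mod_dvd; case/andP: (Hr_in j Hj) => H1 H2.
      by apply: Hlam.
    rewrite big_seq_cond; apply: (big_ind (fun x : int => ((md j)%:Z %| x)%Z)) => [|a b Ha Hb|i /andP[Hi Hij]].
    - exact: dvdz0.
    - exact: rpredD.
    - apply: dvdz_mulr; apply: dvdz_mull; rewrite HMi //.
      rewrite dvdzE /= big_mkcond (bigD1_seq j) //= eq_sym Hij.
      exact: dvdn_mulr.
  have Hcop' : forall i j, i \in r -> j \in r -> i != j -> coprime (md i) (md j).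
    move=> i j Hi Hj Hij.
    case/andP: (Hr_in i Hi) => /andP[Hi1 Hi2] _.
    case/andP: (Hr_in j Hj) => /andP[Hj1 Hj2] _.
    case: (ltngtP i j) => Hlt.
    - apply: Hcop; lia.
    - rewrite coprime_sym; apply: Hcop; lia.
    - by rewrite Hlt eqxx in Hij.
  have HMd := @crt_dvd md r _ Hur Hcop' Hdvd.
  rewrite HY HM -(subrK (yval (md 0%N) delta alpha l) S) -(divzK HMd) modzMDl modz_small //.
  case/andP: (Hy l Hl) => -> Hlt /=.
  apply: (lt_le_trans Hlt); rewrite lez_nat.
  have := @prod_ge md n Hmono Hpos r 1 (t l) (sorted_filter ltn_trans _ (iota_ltn_sorted 1 (N l))).
  rewrite add1n; apply.
    apply/allP => i Hi; case/andP: (Hr_in i Hi) => /andP[-> H] _ /=; lia.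
  by rewrite size_filter; apply: HAgam.
have part2 : forall l, (1 <= l <= m)%N ->
    (Yval md N m delta alpha c h A lam l %% (md 0%N)%:Z)%Z = delta l.
  move=> l Hl; rewrite part1 // /yval addrC modzMDl modz_small //.
  case: (ltngtP l m) => Hlm.
  - apply: Hdelta; lia.
  - lia.
  - subst l; rewrite Hdeltam modz_ge0 ?ltz_pmod //=; lia.
split.
  by move=> l Hl; split; [apply: part1|apply: part2].
rewrite /output.
have -> : \sum_(1 <= l < m.+1) (Yval md N m delta alpha c h A lam l %% (md 0%N)%:Z)%Z
        = \sum_(1 <= l < m.+1) delta l.
  by apply: eq_big_nat => l Hl; apply: part2.
rewrite (big_nat_recr m 1) //= Hdeltam modzDmr addrC subrK modz_small //.
Qed.
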